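(* Let $G$ be a finite group of order $n$, and $X\subseteq G$ a non-empty proper subset of size $m$. If $m>n-\frac12-\sqrt{n-\frac34}$, then $X$ is $2$-generic in $G$. Hence if $m<\frac12+\sqrt{n-\frac34}$, then $X$ is not $2$-large in $G$.
   Context: For $X\subseteq G$: $X$ is $k$-large in $G$ if the intersection of any $k$ left translates $g_1X\cap\dots\cap g_kX$ ($g_i\in G$) is non-empty; $X$ is $k$-generic in $G$ if there are $g_1,\dots,g_k\in G$ with $G=\bigcup_{i\le k}g_iX$. *)

(* Defs.v *)
From mathcomp Require Import all_boot all_order all_algebra all_fingroup all_field.
Set Implicit Arguments. Unset Strict Implicit. Unset Printing Implicit Defensive.

Local Open Scope group_scope.

(* The finite group G is the whole carrier of gT : finGroupType.
   Left translate gX is the left coset  g *: X. *)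

Definition k_large (gT : finGroupType) (k : nat) (X : {set gT}) : Prop :=
  forall g : 'I_k -> gT, \bigcap_(i < k) (g i *: X) != set0.

Definition k_generic (gT : finGroupType) (k : nat) (X : {set gT}) : Prop :=
  exists g : 'I_k -> gT, \bigcup_(i < k) (g i *: X) = [set: gT].

(* Main.v *)
Require Import Defs.
From mathcomp Require Import all_boot all_order all_algebra all_fingroup all_field.
From mathcomp Require Import zify ring lra.
Import Order.TTheory GRing.Theory Num.Theory.

Section G. Local Open Scope group_scope.

Lemma key (gT : finGroupType) (Y : {set gT}) :
  (Y != set0 -> (#|Y|*#|Y| + 1 < #|gT| + #|Y|)%N) ->
  exists g, Y :&: g *: Y = set0.
Proof.
move=> H0; have [->|nY] := eqVneq Y set0; first by exists 1; rewrite set0I.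
have H := H0 nY.
have [g /eqP Hg|Hall] := pickP (fun g => Y :&: g *: Y == set0); first by exists g.
exfalso.
set D := setX Y Y :\: [set p | p.1 == p.2].
have cD : (#|D| + #|Y| = #|Y|*#|Y|)%N.
  rewrite -cardsX -(cardsID [set p | p.1 == p.2] (setX Y Y)) addnC; congr (_ + _)%N.
  have inj : injective (fun y : gT => (y, y)) by move=> a b [].
  rewrite -(card_imset (mem Y) inj); apply: eq_card => -[a b].
  rewrite !inE /=; apply/imsetP/andP => [[y yY [-> ->]]|[/andP[aY bY] /eqP <-]].
    by rewrite yY.
  by exists a.
have sub: [set~ 1] \subset [set p.1 * p.2^-1 | p in D].
  apply/subsetP => g; rewrite !inE => g1.
  have := Hall g; move/negbT/set0Pn => [x]; rewrite !inE mem_lcoset => /andP[xY gxY].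
  apply/imsetP; exists (x, g^-1 * x); last by rewrite /= invMg invgK mulgA mulgV mul1g.
  rewrite !inE /= xY gxY andbT andbT; apply/negP => /eqP e; move/negP: g1; apply.
  have : g^-1 * x = 1 * x by rewrite -e mul1g.
  by move/mulIg => /eqP; rewrite eq_invg1.
have := subset_leq_card sub; rewrite cardsC1.
have h1 := leq_imset_card (fun p : gT * gT => p.1 * p.2^-1) D.
move=> h2; have h3 : (#|gT|.-1 <= #|D|)%N := leq_trans h2 h1.
lia.
Qed.
End G.

Local Open Scope ring_scope.

Lemma realpart (R : rcfType) (n k : nat) : (0 < n)%N -> (0 < k)%N ->
  (k%:R < 2%:R^-1 + Num.sqrt (n%:R - 3%:R / 4%:R) :> R) -> (k*k+1 < n+k)%N.
Proof.
move=> n0 k0 h.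
have hn : (1 <= n%:R :> R) by rewrite ler1n.
have hk : (1 <= k%:R :> R) by rewrite ler1n.
set s := Num.sqrt _ in h.
have s0 : 0 <= s by exact: sqrtr_ge0.
have ss : s * s = n%:R - 3%:R / 4%:R.
  rewrite -expr2 sqr_sqrtr //; lra.
rewrite -(ltr_nat R) !natrD natrM.
nra.
Qed.

Theorem theorem2p8 (R : rcfType) (gT : finGroupType) (X : {set gT}) :
  X != set0 -> X != [set: gT] ->
  ((#|gT|%:R - 2%:R^-1 - Num.sqrt (#|gT|%:R - 3%:R / 4%:R) < #|X|%:R :> R)%R ->
     k_generic 2 X) /\
  ((#|X|%:R < 2%:R^-1 + Num.sqrt (#|gT|%:R - 3%:R / 4%:R) :> R)%R ->
     ~ k_large 2 X).
Proof.
move=> _ _.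
have n0 : (0 < #|gT|)%N by apply/card_gt0P; exists 1%g.
split.
- move=> h.
  have [g Hg] : exists g, (~: X) :&: (g *: ~: X)%g = set0.
    apply: key => nY; apply: (@realpart R) => //; first by rewrite card_gt0.
    have e := cardsC X.
    have : (#|gT|%:R = #|X|%:R + #|~: X|%:R :> R) by rewrite -natrD e.
    move=> hh; clear e; move: h hh; set s := Num.sqrt _.
    set a := (#|gT|%:R : R); set b := (#|X|%:R : R); set c := (#|~: X|%:R : R).
    lra.
  exists (fun i : 'I_2 => if i == ord0 then 1%g else g).
  rewrite big_ord_recl big_ord1 /= lcoset1.
  apply/setP => z; rewrite !inE.
  case zX: (z \in X) => //=.
  apply/negPn/negP => ngz.
  have : z \in (set0 : {set gT}).
    rewrite -Hg !inE zX /= mem_lcoset inE.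
    by rewrite mem_lcoset in ngz.
  by rewrite inE.
- move=> h Hl.
  have [g Hg] : exists g, X :&: (g *: X)%g = set0.
    apply: key => nY; apply: (@realpart R) => //; by rewrite card_gt0.
  have := Hl (fun i : 'I_2 => if i == ord0 then 1%g else g).
  by rewrite big_ord_recl big_ord1 /= lcoset1 Hg eqxx.
Qed.
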